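(* Let $\mathcal C$ be a concept hierarchy and $r_2\in[0,1]$. Let $\mathcal A_1$ be the network defined below. Then for every $B\subseteq C_0$ presented at time 0 and every $c\in supp_{r_2}(B)$, the neuron $rep(c)$ fires at time $level(c)$ in $\mathcal A_1$ (that is, $\mathcal A_1$ guarantees $r_2$-firing for $\mathcal C$).
   Context: Concept hierarchies: fix positive integers $\ell_{max},n,k$. A universal set $D$ of concepts is partitioned into disjoint sets $D_0,\dots,D_{\ell_{max}}$ with $|D_0|=n$; $level(c)=\ell$ for $c\in D_\ell$. A concept hierarchy $\mathcal C$ consists of $C\subseteq D$, with $C_\ell=C\cap D_\ell$, and for each $c\in C_\ell$ with $1\le\ell\le\ell_{max}$ a set $children(c)\subseteq C_{\ell-1}$, such that $|C_{\ell_{max}}|=k$, $|children(c)|=k$ for all such $c$, and $children(c)\cap children(c')=\emptyset$ for distinct $c,c'\in C_\ell$. For $B\subseteq D_0$ and $r\in[0,1]$: $B(0)=B\cap C_0$; for $1\le\ell\le\ell_{max}$, $B(\ell)=\{c\in C_\ell:|children(c)\cap B(\ell-1)|\ge rk\}$; $supp_r(B)=\bigcup_{\ell}B(\ell)$. Network $\mathcal A_1$: neurons partitioned into layers $N_0,\dots,N_{\ell_{max}}$; no failures. Each $c\in D_0$ has a neuron $rep(c)\in N_0$ and each $c\in C$ with $level(c)\ge1$ a neuron $rep(c)\in N_{level(c)}$, all distinct. For $v\in N_\ell$, $\ell\ge1$, and $u\in N_{\ell-1}$, the edge weight $w(u,v)$ is $1$ if $v=rep(c)$ and $u=rep(c')$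 for some child $c'$ of $c$, and $0$ otherwise. Threshold $\tau=r_2k$. Input $B\subseteq C_0$ presented at time 0: layer-0 neurons in $\{rep(b):b\in B\}$ fire at time 0, other layer-0 neurons do not, and no layer-0 neuron fires at any other time. Every neuron $v$ in a layer $\ell\ge1$ does not fire at time 0 and fires at time $t\ge1$ iff $\sum_{u\in N_{\ell-1}}w(u,v)x_u(t-1)\ge\tau$, where $x_u(s)\in\{0,1\}$ indicates whether $u$ fires at time $s$. *)

(* Defs.v *)
From HB Require Import structures.
From mathcomp Require Import all_boot all_order all_algebra.
From mathcomp Require Import reals.
Set Implicit Arguments. Unset Strict Implicit. Unset Printing Implicit Defensive.
Import Order.TTheory GRing.Theory Num.Theory.

Definition D_ (D : finType) (level : D -> nat) (l : nat) : {set D} :=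
  [set c | level c == l].

Definition is_concept_hierarchy (D : finType) (lmax n k : nat)
    (level : D -> nat) (C : {set D}) (children : D -> {set D}) : Prop :=
  [/\ (forall c : D, level c <= lmax),
      #|D_ level 0| = n,
      #|C :&: D_ level lmax| = k,
      (forall c, c \in C -> 1 <= level c ->
          children c \subset C :&: D_ level (level c).-1
          /\ #|children c| = k) &
      (forall c c', c \in C -> c' \in C -> 1 <= level c -> level c = level c' ->
          c != c' -> [disjoint children c & children c'])].

Fixpoint Bl (D : finType) (R : realType) (level : D -> nat) (C : {set D})
    (children : D -> {set D}) (k : nat) (r : R) (B : {set D}) (l : nat)
    : {set D} :=
  match l with
  | 0 => B :&: (C :&: D_ level 0)
  | l'.+1 => [set c in C :&: D_ level l'.+1 |
               (r * k%:R <= (#|children c :&: Bl level C children k r B l'|)%:R)%R]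
  end.

Definition supp (D : finType) (R : realType) (lmax : nat) (level : D -> nat)
    (C : {set D}) (children : D -> {set D}) (k : nat) (r : R) (B : {set D})
    : {set D} :=
  \bigcup_(l < lmax.+1) Bl level C children k r B l.

Definition rep_dom (D : finType) (level : D -> nat) (C : {set D}) : {set D} :=
  D_ level 0 :|: [set c in C | 1 <= level c].

Definition is_A1_layout (D N : finType) (lmax : nat) (level : D -> nat)
    (C : {set D}) (layer : N -> nat) (rep : D -> N) : Prop :=
  [/\ (forall v : N, layer v <= lmax),
      {in rep_dom level C &, injective rep} &
      (forall c, c \in rep_dom level C -> layer (rep c) = level c)].

Definition weight (D N : finType) (level : D -> nat) (C : {set D})
    (children : D -> {set D}) (rep : D -> N) (u v : N) : nat :=
  [exists c in C, [&& 1 <= level c, v == rep c &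
                      [exists c' in children c, u == rep c']]].

Fixpoint fires (D N : finType) (R : realType) (level : D -> nat) (C : {set D})
    (children : D -> {set D}) (layer : N -> nat) (rep : D -> N)
    (k : nat) (r2 : R) (B : {set D}) (t : nat) (v : N) : bool :=
  match t with
  | 0 => (layer v == 0) && [exists b in B, v == rep b]
  | t'.+1 => (layer v != 0) &&
      (r2 * k%:R <=
        (\sum_(u : N | layer u == (layer v).-1)
           weight level C children rep u v *
           fires level C children layer rep k r2 B t' u)%:R)%R
  end.

(* Main.v *)
Require Import Defs.
From HB Require Import structures.
From mathcomp Require Import all_boot all_order all_algebra.
From mathcomp Require Import reals.
Import Order.TTheory GRing.Theory Num.Theory.

Lemma Bl_sub (R : realType) (D : finType) (level : D -> nat) (C : {set D})
  (children : D -> {set D}) k (r : R) B l :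
  Bl level C children k r B l \subset C :&: D_ level l.
Proof.
case: l => [|l] /=; first exact: subsetIr.
apply/subsetP => x; rewrite inE => /andP[] //.
Qed.

Theorem theorem6p1 (R : realType) (D N : finType) (lmax n k : nat)
    (level : D -> nat) (C : {set D}) (children : D -> {set D})
    (layer : N -> nat) (rep : D -> N) (r2 : R) :
  0 < lmax -> 0 < n -> 0 < k ->
  is_concept_hierarchy lmax n k level C children ->
  (0 <= r2 <= 1)%R ->
  is_A1_layout lmax level C layer rep ->
  forall B : {set D}, B \subset C :&: D_ level 0 ->
  forall c, c \in supp lmax level C children k r2 B ->
    fires level C children layer rep k r2 B (level c) (rep c).
Proof.
move=> _ _ _ _ _ [_ Hinj Hlay] B _.
have inBl : forall l c, c \in Bl level C children k r2 B l ->
    c \in C /\ level c = l.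
  move=> l c /(subsetP (Bl_sub _ _ _ _ _ _ _ _ _)).
  by rewrite !inE => /andP[-> /eqP].
have indom : forall c, c \in C -> c \in rep_dom level C.
  move=> c cC; rewrite !inE cC /=; by case: (level c).
suff H : forall l c, c \in Bl level C children k r2 B l ->
    fires level C children layer rep k r2 B l (rep c).
  move=> c /bigcupP [l _ Hc]; have [_ ->] := inBl _ _ Hc; exact: H.
elim=> [|l IH] c Hc.
  have [cC lc] := inBl _ _ Hc.
  rewrite /= Hlay ?indom // lc eqxx /=.
  apply/existsP; exists c; apply/andP; split => //.
  by move: Hc; rewrite /= !inE => /andP[].
have [cC lc] := inBl _ _ Hc.
move: Hc; rewrite /= inE => /andP[_ Hr].
rewrite Hlay ?indom // lc /=.
apply: (le_trans Hr); rewrite ler_nat.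
set S := children c :&: Bl level C children k r2 B l.
have Sdom : {subset S <= rep_dom level C}.
  move=> x; rewrite inE => /andP[_ /inBl [xC _]]; exact: indom.
have -> : #|S| = #|rep @: S|.
  by rewrite card_in_imset //; move=> x y xS yS; apply: Hinj; apply: Sdom.
rewrite (bigID (mem (rep @: S))) /= -[X in (X <= _)%N]addn0 leq_add //.
rewrite -sum1_card big_mkcond [X in (_ <= X)%N]big_mkcond /=.
apply: leq_sum => u _.
case: ifP => // /imsetP [x xS ->].
have xB : x \in Bl level C children k r2 B l by move: xS; rewrite inE => /andP[].
have xc : x \in children c by move: xS; rewrite inE => /andP[].
have [_ lx] := inBl _ _ xB.
rewrite Hlay ?Sdom // lx eqxx /= IH // muln1.
rewrite /weight (_ : [exists _ in C, _] = true) //.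
  apply/existsP; exists c; rewrite cC lc /= eqxx /=.
  by apply/existsP; exists x; rewrite xc eqxx.
Qed.
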